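(* Let $F,L,K$ be number fields such that $K/F$ is cyclic of degree $n$ with $\mathrm{Gal}(K/F)=\langle\rho\rangle$, $K/L$ is cyclic of degree $m$ with $\mathrm{Gal}(K/L)=\langle\sigma\rangle$, and $\rho\sigma=\sigma\rho$; put $F_0=F\cap L$. Let $c\in\mathcal{O}_{F_0}^\times$ be such that $D=(K/F,\rho,c)$ is a division algebra, let $\mathcal{D}=\bigoplus_{i=0}^{n-1}\mathcal{O}_Ke^i$ (with $ex=\rho(x)e$, $e^n=c$) be its natural order, and extend $\sigma$ to $\mathcal{D}$ coefficientwise. Let $d\in\mathcal{O}_L^\times$ with $t^m-d$ irreducible in $D[t;\sigma]$ and $\Lambda=\mathcal{D}[t;\sigma]/\mathcal{D}[t;\sigma](t^m-d)$. Let $\mathcal{I}=\mathfrak{q}_1^{s_1}\cdots\mathfrak{q}_l^{s_l}$ be a non-zero ideal of $\mathcal{O}_{F_0}$ with distinct prime ideals $\mathfrak{q}_j$, and for $1\le j\le l$ let $$D_j=\big((\mathcal{O}_K/\mathfrak{q}_j^{s_j}\mathcal{O}_K)/(\mathcal{O}_F/\mathfrak{q}_j^{s_j}\mathcal{O}_F),\overline{\rho},c+\mathfrak{q}_j^{s_j}\mathcal{O}_K\big),$$ with $\overline{\rho}(u+\mathfrak{q}_j^{s_j}\mathcal{O}_K)=\rho(u)+\mathfrak{q}_j^{s_j}\mathcal{O}_K$, and with $\overline{\sigma}$ acting on $D_j$ coefficientwise via $\overline{\sigma}(u+\mathfrak{q}_j^{s_j}\mathcal{O}_K)=\sigma(u)+\mathfrak{q}_j^{s_j}\mathcal{O}_K$.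 If $\mathcal{D}/\mathcal{I}\mathcal{D}\cong D_1\times\dots\times D_l$, then $$\Lambda/\mathcal{I}\Lambda\cong D_1[t;\overline{\sigma}]/D_1[t;\overline{\sigma}](t^m-\bar d_1)\times\dots\times D_l[t;\overline{\sigma}]/D_l[t;\overline{\sigma}](t^m-\bar d_l),$$ equivalently $\Lambda/\mathcal{I}\Lambda\cong(D_1,\overline{\sigma},\bar d_1)\times\dots\times(D_l,\overline{\sigma},\bar d_l)$, where $\bar d_j=d+\mathfrak{q}_j^{s_j}\mathcal{O}_K$.
   Context: For a unital associative ring $S$ with injective endomorphism $\sigma$, $S[t;\sigma]$ is the skew polynomial ring with $ta=\sigma(a)t$. For monic $f$ of degree $m$, $S[t;\sigma]/S[t;\sigma]f$ (the Petit algebra) is the set of polynomials of degree $<m$ with multiplication $g\circ h=gh\bmod_r f$ (remainder of right division by $f$), a unital nonassociative ring; $(S,\sigma,g)$ denotes $S[t;\sigma]/S[t;\sigma](t^m-g)$. For commutative rings $S_0\subset S$ with $S_0\subset\mathrm{Fix}(\rho)$, $(S/S_0,\rho,c)$ denotes $S[e;\rho]/S[e;\rho](e^n-c)$, a generalized associative cyclic algebra when $c\in S_0$. Products of rings have componentwise operations. *)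

(* Defs.v *)
From HB Require Import structures.
From mathcomp Require Import all_boot all_order all_algebra all_field.
Set Implicit Arguments. Unset Strict Implicit. Unset Printing Implicit Defensive.
Import GRing.Theory.
Local Open Scope ring_scope.

(* "Setoid rings": a ring given by a carrier zmodType T, a subset [sdom] of  *)
(* representatives, an equivalence [seqv] (equality, or congruence modulo    *)
(* an ideal for quotient rings), a (possibly nonassociative) product and a   *)
(* unit.  Addition and zero are those of T.                                  *)
Record sring (T : zmodType) := SRing {
  sdom : T -> Prop;
  seqv : T -> T -> Prop;
  smul : T -> T -> T;
  sone : T }.

(* Petit algebra S[t;s]/S[t;s](t^m - g): polynomials of degree < m, stored as *)
(* coefficient vectors a : 'I_m -> S (a i = coefficient of t^i).  Product of *)
(* a t^i and b t^j is a s^i(b) t^(i+j); if i+j = k+m >= m, its remainder of  *)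
(* right division by t^m - g is a s^i(b) s^k(g) t^k, since                    *)
(* t^(k+m) = t^k (t^m - g) + s^k(g) t^k.                                      *)
Definition petit_mul (T : zmodType) (mul : T -> T -> T) (s : T -> T) (g : T)
  (m : nat) (a b : {ffun 'I_m -> T}) : {ffun 'I_m -> T} :=
  [ffun k : 'I_m => \sum_(i < m) \sum_(j < m)
     (if (i + j == k)%N then mul (a i) (iter i s (b j))
      else if (i + j == k + m)%N then mul (mul (a i) (iter i s (b j))) (iter k s g)
      else 0)].
Arguments petit_mul {T} mul s g m a b.

Definition const_poly (T : zmodType) (m : nat) (x : T) : {ffun 'I_m -> T} :=
  [ffun k : 'I_m => if (k == 0 :> nat) then x else 0].
Arguments const_poly {T} m x.

Definition petit (T : zmodType) (S : sring T) (s : T -> T) (g : T) (m : nat)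
  : sring {ffun 'I_m -> T} :=
  SRing (fun a : {ffun 'I_m -> T} => forall i, sdom S (a i))
        (fun a b : {ffun 'I_m -> T} => forall i, seqv S (a i) (b i))
        (petit_mul (smul S) s g m) (const_poly m (sone S)).

Definition coefwise (T : zmodType) (m : nat) (s : T -> T) (a : {ffun 'I_m -> T})
  : {ffun 'I_m -> T} := [ffun i => s (a i)].

(* The (left) ideal of A generated by the image of I under emb : R -> T,     *)
(* i.e. finite sums  sum_k emb(a_k) y_k  with a_k in I and y_k in A.  (Used  *)
(* only for central I, where it is the two-sided ideal I A.)                 *)
Definition ideal_ext (R : Type) (T : zmodType) (A : sring T) (emb : R -> T)
  (I : R -> Prop) (x : T) : Prop :=
  exists (k : nat) (a : 'I_k -> R) (y : 'I_k -> T),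
    [/\ forall i, I (a i), forall i, sdom A (y i) &
        x = \sum_(i < k) smul A (emb (a i)) (y i)].

Definition quot (T : zmodType) (A : sring T) (J : T -> Prop) : sring T :=
  SRing (sdom A) (fun x y => exists2 z, J z & seqv A (x - y) z) (smul A) (sone A).

Definition sprod (T : zmodType) (l : nat) (A : 'I_l -> sring T)
  : sring {ffun 'I_l -> T} :=
  SRing (fun x : {ffun 'I_l -> T} => forall j, sdom (A j) (x j))
        (fun x y : {ffun 'I_l -> T} => forall j, seqv (A j) (x j) (y j))
        (fun x y : {ffun 'I_l -> T} => [ffun j => smul (A j) (x j) (y j)])
        [ffun j => sone (A j)].

Definition siso (T U : zmodType) (A : sring T) (B : sring U) : Prop :=
  exists f : T -> U,
    (forall x, sdom A x -> sdom B (f x)) /\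
    (forall x y, sdom A x -> sdom A y -> (seqv B (f x) (f y) <-> seqv A x y)) /\
    (forall y, sdom B y -> exists2 x, sdom A x & seqv B (f x) y) /\
    (forall x y, sdom A x -> sdom A y -> seqv B (f (x + y)) (f x + f y)) /\
    (forall x y, sdom A x -> sdom A y -> seqv B (f (smul A x y)) (smul B (f x) (f y))) /\
    seqv B (f (sone A)) (sone B).

Definition division_ring (T : zmodType) (mul : T -> T -> T) : Prop :=
  forall a : T, a != 0 -> bijective (mul a) /\ bijective (fun x => mul x a).

Section NF.
Variable K : fieldExtType rat.

Definition integral (x : K) : Prop :=
  exists p : {poly int}, p \is monic /\ root (map_poly (fun z : int => z%:~R : K) p) x.

Definition ring_of_integers (E : {vspace K}) (x : K) : Prop := x \in E /\ integral x.

Definition unit_of (R : K -> Prop) (x : K) : Prop := [/\ R x, x != 0 & R x^-1].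

Definition field_ring : sring K := SRing (fun _ => True) (fun x y => x = y) *%R 1.
Definition OK_ring : sring K := SRing integral (fun x y => x = y) *%R 1.

Definition is_ideal (R J : K -> Prop) : Prop :=
  [/\ forall x, J x -> R x, J 0, forall x y, J x -> J y -> J (x + y)
    & forall r x, R r -> J x -> J (r * x)].

Definition prime_ideal (R J : K -> Prop) : Prop :=
  [/\ is_ideal R J, ~ J 1
    & forall a b, R a -> R b -> J (a * b) -> J a \/ J b].

Definition ideal_mul (J1 J2 : K -> Prop) (x : K) : Prop :=
  exists (k : nat) (a b : 'I_k -> K),
    [/\ forall i, J1 (a i), forall i, J2 (b i) & x = \sum_(i < k) a i * b i].

Definition ideal_pow (R J : K -> Prop) (s : nat) : K -> Prop :=
  iter s (ideal_mul J) R.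

Definition ideal_prod (R : K -> Prop) (l : nat) (P : 'I_l -> K -> Prop) : K -> Prop :=
  foldr (fun j acc => ideal_mul (P j) acc) R (enum 'I_l).

Definition cyclic_with_gen (E : {subfield K}) (r : {rmorphism K -> K}) (n : nat) :=
  [/\ \dim {:K} = (n * \dim E)%N,
      (forall x, iter n r x = x),
      (forall k, (0 < k < n)%N -> exists x, iter k r x != x)
    & forall tau : {rmorphism K -> K},
        (forall x, x \in E -> tau x = x) <-> exists k, forall x, tau x = iter k r x].

(* coefficients of a product g h in the skew polynomial ring T[t;s] *)
Definition skew_coef (T : zmodType) (mul : T -> T -> T) (s : T -> T)
  (g h : nat -> T) (p : nat) : T :=
  \sum_(i < p.+1) mul (g i) (iter i s (h (p - i)%N)).

Definition skew_irreducible (T : zmodType) (mul : T -> T -> T) (s : T -> T)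
  (f : nat -> T) : Prop :=
  ~ exists (a b : nat) (g h : nat -> T),
      [/\ (0 < a)%N /\ (0 < b)%N, g a != 0 /\ h b != 0,
          (forall i, (a < i)%N -> g i = 0), (forall i, (b < i)%N -> h i = 0)
        & forall p, skew_coef mul s g h p = f p].

Definition tm_minus (T : zmodType) (one : T) (m : nat) (d : T) (p : nat) : T :=
  if (p == 0)%N then - d else if (p == m)%N then one else 0.

Definition Dalg (rho : K -> K) (c : K) (n : nat) := petit field_ring rho c n.
Definition Dord (rho : K -> K) (c : K) (n : nat) := petit OK_ring rho c n.
Definition Lam (rho sigma : K -> K) (c d : K) (n m : nat) :=
  petit (Dord rho c n) (coefwise sigma) (const_poly n d) m.
Definition Dj (rho : K -> K) (c : K) (n : nat) (J : K -> Prop) :=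
  petit (quot OK_ring (ideal_ext OK_ring id J)) rho c n.
Definition Pj (rho sigma : K -> K) (c d : K) (n m : nat) (J : K -> Prop) :=
  petit (Dj rho c n J) (coefwise sigma) (const_poly n d) m.

End NF.

(* Main.v *)
Require Import Defs.
From HB Require Import structures.
From mathcomp Require Import all_boot all_order all_algebra all_field.
From mathcomp Require Import ring.
From Stdlib Require Import Classical.
Import GRing.Theory.
Local Open Scope ring_scope.

Set Implicit Arguments. Unset Strict Implicit. Unset Printing Implicit Defensive.

Definition fsum {X Y : Type} {V : zmodType} (P : X -> Prop) (Q : Y -> Prop)
  (f : X -> Y -> V) (x : V) : Prop :=
  exists (k : nat) (a : 'I_k -> X) (b : 'I_k -> Y),
    [/\ forall i, P (a i), forall i, Q (b i) & x = \sum_(i < k) f (a i) (b i)].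

Definition ord0_elim (X : Type) (i : 'I_0) : X :=
  match notF (ltn_ord i) return X with end.

Section Fsum.
Variables (X Y : Type) (V : zmodType) (P : X -> Prop) (Q : Y -> Prop) (f : X -> Y -> V).

Lemma fsum0 : fsum P Q f 0.
Proof.
exists 0%N, (@ord0_elim X), (@ord0_elim Y); split; try by case.
by rewrite big_ord0.
Qed.

Lemma fsum1 a b : P a -> Q b -> fsum P Q f (f a b).
Proof.
move=> Pa Qb; exists 1%N, (fun _ => a), (fun _ => b); split=> //.
by rewrite big_ord1.
Qed.

Lemma fsumD x y : fsum P Q f x -> fsum P Q f y -> fsum P Q f (x + y).
Proof.
move=> [k1 [a1 [b1 [Pa1 Qb1 ->]]]] [k2 [a2 [b2 [Pa2 Qb2 ->]]]].
exists (k1 + k2)%N,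
  (fun i => match split i with inl i1 => a1 i1 | inr i2 => a2 i2 end),
  (fun i => match split i with inl i1 => b1 i1 | inr i2 => b2 i2 end).
split.
- by move=> i; case: (split i).
- by move=> i; case: (split i).
rewrite big_split_ord /=.
congr (_ + _); apply: eq_bigr => i _.
  by rewrite (unsplitK (inl i)).
by rewrite (unsplitK (inr i)).
Qed.

Lemma fsum_sum (I : Type) (r : seq I) (g : I -> V) :
  (forall i, fsum P Q f (g i)) -> fsum P Q f (\sum_(i <- r) g i).
Proof.
move=> H; apply: (big_ind (fsum P Q f)); [exact: fsum0 | exact: fsumD | by []].
Qed.

Lemma fsum_mono (P' : X -> Prop) (Q' : Y -> Prop) x :
  (forall a, P a -> P' a) -> (forall b, Q b -> Q' b) ->
  fsum P Q f x -> fsum P' Q' f x.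
Proof.
move=> HP HQ [k [a [b [Pa Qb ->]]]]; exists k, a, b; split=> // i.
exact: HP. exact: HQ.
Qed.

End Fsum.

Lemma fsum_hom (X Y : Type) (V : zmodType) (P : X -> Prop) (Q : Y -> Prop) (f : X -> Y -> V) (X' Y' : Type) (W : zmodType) (P' : X' -> Prop) (Q' : Y' -> Prop)
  (f' : X' -> Y' -> W) (h : V -> W) :
  h 0 = 0 -> (forall u v, h (u + v) = h u + h v) ->
  (forall a b, P a -> Q b -> fsum P' Q' f' (h (f a b))) ->
  forall x, fsum P Q f x -> fsum P' Q' f' (h x).
Proof.
move=> h0 hD H x [k [a [b [Pa Qb ->]]]].
rewrite (big_morph h hD h0); apply: fsum_sum => i; exact: H.
Qed.



Section R.
Variables (K : fieldExtType rat) (F L : {subfield K}).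
Local Notation R0 := (ring_of_integers (F :&: L)%VS).

Lemma integralE (x : K) : integral x <-> integralOver (intr : int -> K) x.
Proof. split; [case=> p [h1 h2]; by exists p | case=> p *; by exists p]. Qed.

Lemma intD (x y : K) : integral x -> integral y -> integral (x + y).
Proof. by move=> /integralE hx /integralE hy; apply/integralE/integral_add. Qed.
Lemma intM (x y : K) : integral x -> integral y -> integral (x * y).
Proof. by move=> /integralE hx /integralE hy; apply/integralE/integral_mul. Qed.
Lemma intN (x : K) : integral x -> integral (- x).
Proof. by move=> /integralE hx; apply/integralE/integral_opp. Qed.
Lemma intB (x y : K) : integral x -> integral y -> integral (x - y).
Proof. by move=> hx hy; apply: intD => //; apply: intN. Qed.
Lemma intZ (z : int) : integral (z%:~R : K).
Proof. apply/integralE. exact: (integral_id (intr : {rmorphism int -> K}) z). Qed.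
Lemma int1 : integral (1 : K).
Proof. by have := intZ 1. Qed.
Lemma int0 : integral (0 : K).
Proof. by have := intZ 0. Qed.

Lemma R0E (x : K) : R0 x <-> [/\ x \in F, x \in L & integral x].
Proof.
rewrite /ring_of_integers memv_cap; split.
  by case=> /andP[h1 h2] h3; split.
by case=> h1 h2 h3; split=> //; apply/andP; split.
Qed.

Lemma R0D x y : R0 x -> R0 y -> R0 (x + y).
Proof. by move=> /R0E[? ? ?] /R0E[? ? ?]; apply/R0E; split; [exact: rpredD | exact: rpredD | exact: intD]. Qed.
Lemma R0M x y : R0 x -> R0 y -> R0 (x * y).
Proof. by move=> /R0E[? ? ?] /R0E[? ? ?]; apply/R0E; split; [exact: rpredM | exact: rpredM | exact: intM]. Qed.
Lemma R0N x : R0 x -> R0 (- x).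
Proof. by move=> /R0E[? ? ?]; apply/R0E; split; [by rewrite memvN | by rewrite memvN | exact: intN]. Qed.
Lemma R0B x y : R0 x -> R0 y -> R0 (x - y).
Proof. by move=> hx hy; apply: R0D => //; apply: R0N. Qed.
Lemma R0Z (z : int) : R0 (z%:~R).
Proof. by apply/R0E; split; [exact: rpred_int | exact: rpred_int | exact: intZ]. Qed.
Lemma R01 : R0 1. Proof. by have := R0Z 1. Qed.
Lemma R00 : R0 0. Proof. by have := R0Z 0. Qed.
Lemma R0_int x : R0 x -> integral x. Proof. by case/R0E. Qed.

Lemma R0_sum (I : Type) (r : seq I) (g : I -> K) :
  (forall i, R0 (g i)) -> R0 (\sum_(i <- r) g i).
Proof. by move=> H; apply: (big_ind R0) => //; [exact: R00 | exact: R0D]. Qed.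

Lemma R0X x k : R0 x -> R0 (x ^+ k).
Proof. move=> hx; elim: k => [|k IH]; first by rewrite expr0; exact: R01. by rewrite exprS; apply: R0M. Qed.

Lemma R0_horner (p : {poly int}) x : R0 x -> R0 (map_poly intr p).[x].
Proof.
move=> hx; rewrite horner_coef; apply: R0_sum => i.
by rewrite coef_map /=; apply: R0M; [exact: R0Z | exact: R0X].
Qed.

Section Ideal.
Variable J : K -> Prop.
Hypothesis HJ : is_ideal R0 J.

Lemma idR0 x : J x -> R0 x. Proof. by case: HJ => h *; exact: h. Qed.
Lemma id0 : J 0. Proof. by case: HJ. Qed.
Lemma idD x y : J x -> J y -> J (x + y). Proof. by case: HJ => _ _ h _; exact: h. Qed.
Lemma idMl r x : R0 r -> J x -> J (r * x). Proof. by case: HJ => _ _ _ h; exact: h. Qed.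
Lemma idMr r x : R0 r -> J x -> J (x * r). Proof. by rewrite mulrC; exact: idMl. Qed.
Lemma idN x : J x -> J (- x).
Proof. by move=> hx; rewrite -mulN1r; apply: idMl => //; apply: R0N; exact: R01. Qed.
Lemma idB x y : J x -> J y -> J (x - y).
Proof. by move=> hx hy; apply: idD => //; apply: idN. Qed.
Lemma id_sum (I : Type) (r : seq I) (g : I -> K) :
  (forall i, J (g i)) -> J (\sum_(i <- r) g i).
Proof. by move=> H; apply: (big_ind J) => //; [exact: id0 | exact: idD]. Qed.
End Ideal.

Lemma R0_ideal : is_ideal R0 R0.
Proof. split=> //; [exact: R00 | exact: R0D | exact: R0M]. Qed.

Lemma mul_ideal J1 J2 : is_ideal R0 J1 -> is_ideal R0 J2 -> is_ideal R0 (ideal_mul J1 J2).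
Proof.
move=> H1 H2; split.
- move=> x [k [a [b [Ha Hb ->]]]]; apply: R0_sum => i.
  by apply: R0M; [exact: (idR0 H1) | exact: (idR0 H2)].
- exact: (fsum0 J1 J2 *%R).
- move=> x y; exact: (fsumD (f := *%R)).
- move=> r x Hr Hx.
  apply: (fsum_hom (f := *%R) (f' := *%R) (h := fun u => r * u)) Hx.
  + by rewrite mulr0.
  + by move=> u v; rewrite mulrDr.
  + move=> a b Ha Hb; rewrite mulrA; apply: (fsum1 *%R) => //.
    exact: idMl.
Qed.

Lemma mul_subl J1 J2 x : is_ideal R0 J1 -> is_ideal R0 J2 -> ideal_mul J1 J2 x -> J1 x.
Proof.
move=> H1 H2 [k [a [b [Ha Hb ->]]]]; apply: (id_sum H1) => i.
by apply: (idMr H1) => //; exact: (idR0 H2).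
Qed.

Lemma mul_subr J1 J2 x : is_ideal R0 J1 -> is_ideal R0 J2 -> ideal_mul J1 J2 x -> J2 x.
Proof.
move=> H1 H2 [k [a [b [Ha Hb ->]]]]; apply: (id_sum H2) => i.
by apply: (idMl H2) => //; exact: (idR0 H1).
Qed.

Lemma imulC (J1 J2 : K -> Prop) x : ideal_mul J1 J2 x -> ideal_mul J2 J1 x.
Proof.
move=> [k [a [b [Ha Hb ->]]]]; exists k, b, a; split=> //.
by apply: eq_bigr => i _; rewrite mulrC.
Qed.

Lemma pow_ideal J s : is_ideal R0 J -> is_ideal R0 (ideal_pow R0 J s).
Proof.
move=> HJ; elim: s => [|s IH] /=; first exact: R0_ideal.
exact: mul_ideal.
Qed.

Lemma pow_sub J s x : is_ideal R0 J -> (0 < s)%N -> ideal_pow R0 J s x -> J x.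
Proof.
move=> HJ; case: s => // s _ /= Hx.
exact: (mul_subl HJ (pow_ideal s HJ) Hx).
Qed.

Lemma pow_mem J s e : J e -> R0 e -> ideal_pow R0 J s (e ^+ s).
Proof.
move=> Je Re; elim: s => [|s IH] /=; first by rewrite expr0; exact: R01.
by rewrite exprS; apply: (fsum1 *%R).
Qed.

Definition prodr (I : Type) (A : I -> K -> Prop) (r : seq I) : K -> Prop :=
  foldr (fun j acc => ideal_mul (A j) acc) R0 r.

Lemma prodr_ideal (I : Type) (A : I -> K -> Prop) r :
  (forall j, is_ideal R0 (A j)) -> is_ideal R0 (prodr A r).
Proof.
move=> HA; elim: r => [|j r IH] /=; first exact: R0_ideal.
exact: mul_ideal.
Qed.

Lemma prodr_sub (I : eqType) (A : I -> K -> Prop) r j x :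
  (forall j, is_ideal R0 (A j)) -> j \in r -> prodr A r x -> A j x.
Proof.
move=> HA; elim: r x => [|k r IH] x //=; rewrite inE => /orP[/eqP -> | jr] Hx.
  exact: (mul_subl (HA k) (prodr_ideal r HA) Hx).
apply: IH => //; exact: (mul_subr (HA k) (prodr_ideal r HA) Hx).
Qed.

Definition IO (J : K -> Prop) := ideal_ext (OK_ring K) id J.

Lemma IO0 J : IO J 0. Proof. exact: fsum0. Qed.
Lemma IOD J x y : IO J x -> IO J y -> IO J (x + y).
Proof. exact: fsumD. Qed.
Lemma IO1 J a y : J a -> integral y -> IO J (a * y).
Proof. move=> ha hy; exact: (fsum1 (fun a y => smul (OK_ring K) (id a) y)). Qed.
Lemma IO_mono (J J' : K -> Prop) x : (forall a, J a -> J' a) -> IO J x -> IO J' x.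
Proof. by move=> H; apply: fsum_mono. Qed.
Lemma IO_int J x : (forall a, J a -> R0 a) -> IO J x -> integral x.
Proof.
move=> H [k [a [b [Ha Hb ->]]]]; apply: (big_ind (@integral K)) => //.
- exact: int0.
- exact: intD.
- move=> i _; apply: intM; [apply: R0_int; exact: H | exact: Hb].
Qed.
Lemma IO_R0 x : integral x -> IO R0 x.
Proof. by move=> hx; rewrite -[x]mul1r; apply: IO1 => //; exact: R01. Qed.
Lemma IO_mul J1 J2 a z : J1 a -> IO J2 z -> IO (ideal_mul J1 J2) (a * z).
Proof.
move=> Ha Hz.
apply: (fsum_hom (f := fun a y => smul (OK_ring K) (id a) y)
                 (f' := fun a y => smul (OK_ring K) (id a) y) (h := fun u => a * u)) Hz.
- by rewrite mulr0.
- by move=> u v; rewrite mulrDr.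
- move=> b y Hb Hy /=; rewrite mulrA; apply: IO1 => //.
  exact: (fsum1 *%R).
Qed.

End R.


Section C.
Variables (K : fieldExtType rat) (F L : {subfield K}).
Local Notation R0 := (ring_of_integers (F :&: L)%VS).
Local Notation iK := (intr : int -> K).

Lemma poly_dec (p : {poly int}) : p = drop_poly 1 p * 'X + (p`_0)%:P.
Proof.
apply/polyP => i; rewrite coefD coefMX coefC coef_drop_poly.
by case: i => [|i] /=; [rewrite add0r | rewrite addr0 addn1].
Qed.

Lemma eval_dec (p : {poly int}) (x : K) :
  (map_poly iK p).[x] = (map_poly iK (drop_poly 1 p)).[x] * x + (p`_0)%:~R.
Proof.
by rewrite {1}(poly_dec p) rmorphD rmorphM /= map_polyX map_polyC hornerD hornerMX hornerC.
Qed.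

Lemma nz_int (x : K) : R0 x -> x != 0 ->
  exists N : int, N != 0 /\ exists2 y, R0 y & N%:~R = x * y.
Proof.
move=> hx xn0; have [p [pm px]] := R0_int hx.
have px' : root (map_poly iK p) x := px.
move: (leqnn (size p)); move: {2}(size p) => n.
elim: n p pm px' {px} => [|n IH] p pm px hs.
  by move: hs; rewrite leqn0 size_poly_eq0 (negbTE (monic_neq0 pm)).
have e := eval_dec p x.
set D := drop_poly 1 p in e.
case: (eqVneq (p`_0) 0) => h0.
  have hp : p = D * 'X by rewrite {1}(poly_dec p) h0 addr0.
  have Dm : D \is monic by move: pm; rewrite hp monicMr ?monicX.
  apply: (IH D Dm).
    move: px; rewrite /root e h0 addr0 mulf_eq0 (negbTE xn0) orbF.
    done.
  move: hs; rewrite hp size_mulX ?monic_neq0 //.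
exists p`_0; split=> //.
exists (- (map_poly iK D).[x]); first by apply: R0N; apply: R0_horner.
move: px; rewrite /root e => /eqP E.
apply: (addrI ((map_poly iK D).[x] * x)); rewrite E mulrN [x * _]mulrC subrr //.
Qed.

Lemma min_nat (P : nat -> Prop) n : P n ->
  exists k, P k /\ forall j, (j < k)%N -> ~ P j.
Proof.
elim: n {-2}n (leqnn n) => [|n IH] m hm Pm.
  by exists m; split=> // j; rewrite leqn0 in hm; rewrite (eqP hm).
case: (classic (exists j, (j < m)%N /\ P j)) => [[j [hj Pj]]|H].
  apply: (IH j) => //; rewrite -ltnS; exact: leq_trans hj hm.
exists m; split=> // j hj Pj; apply: H; by exists j.
Qed.

Lemma nat_R0 (k : nat) : R0 k%:R.
Proof. by have := R0Z F L k; rewrite -pmulrn. Qed.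

Lemma bez_id (R : comRingType) (U V N Pp Da a : R) :
  U * N + V * Pp = 1 -> 1 - - (U * Da) * a = U * (Da * a + N) + V * Pp.
Proof. move=> B; rewrite -B; ring. Qed.

Section Max.
Variable q : K -> Prop.
Hypothesis Hq : prime_ideal R0 q.
Hypothesis Hq0 : exists x, q x /\ x <> 0.

Let Hqi : is_ideal R0 q. Proof. by case: Hq. Qed.
Let Hq1 : ~ q 1. Proof. by case: Hq. Qed.
Let Hqp a b : R0 a -> R0 b -> q (a * b) -> q a \/ q b.
Proof. by case: Hq => _ _; apply. Qed.

Lemma pos_nat_in : exists n, (0 < n)%N /\ q n%:R.
Proof.
case: Hq0 => x [qx xn0].
have [N [Nn0 [y Ry Ny]]] := nz_int (idR0 Hqi qx) (introN eqP xn0).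
have qN : q N%:~R by rewrite Ny; apply: (idMr Hqi).
case: N Nn0 Ny qN => k Nn0 _ qN.
  by exists k; split; [rewrite lt0n | ].
exists k.+1; split=> //; move: qN; rewrite NegzE mulrNz => /(idN Hqi).
by rewrite opprK.
Qed.

Lemma int_in (z : int) (p : nat) : q p%:R -> (p %| `|z|)%N -> q z%:~R.
Proof.
move=> qp dp.
have dz : (p %| z)%Z by [].
rewrite -(divzK dz) intrM; apply: (idMl Hqi); first exact: (R0Z F L).
by [].
Qed.

Lemma maximal a : R0 a -> ~ q a -> exists2 r, R0 r & q (1 - r * a).
Proof.
move=> Ra nqa.
have [p0 [hp0 qp0]] := pos_nat_in.
have [p [[pp qp] pmin]] := @min_nat (fun k => (0 < k)%N /\ q k%:R) p0 (conj hp0 qp0).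
have [P [Pm Pa]] := R0_int Ra.
have Pa' : q (map_poly iK P).[a] by move: Pa => /eqP ->; apply: (id0 Hqi).
move: (leqnn (size P)); move: {2}(size P) => n.
elim: n P Pm Pa' {Pa} => [|n IH] P Pm Pa hs.
  by move: hs; rewrite leqn0 size_poly_eq0 (negbTE (monic_neq0 Pm)).
have e := eval_dec P a.
set D := drop_poly 1 P in e.
case: (eqVneq D 0) => D0.
  exfalso; apply: Hq1.
  have hP : P = (P`_0)%:P by rewrite {1}(poly_dec P) -/D D0 mul0r add0r.
  have : P`_0 = 1 by move: Pm => /monicP; rewrite {1}hP lead_coefC.
  by move=> h1; move: Pa; rewrite e D0 rmorph0 horner0 mul0r add0r h1.
have hP : P = D * 'X + (P`_0)%:P by exact: poly_dec.
have sDX : size (D * 'X) = (size D).+1 by rewrite size_mulX.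
have Dm : D \is monic.
  move: Pm; rewrite hP => /monicP; rewrite lead_coefDl ?lead_coefMX.
    by move/monicP.
  by rewrite sDX ltnS (leq_trans (size_polyC_leq1 _)) // lt0n size_poly_eq0.
case: (classic (q (P`_0)%:~R)) => q0.
  have qDa : q ((map_poly iK D).[a] * a).
    have -> : (map_poly iK D).[a] * a = (map_poly iK P).[a] - (P`_0)%:~R.
      by rewrite e addrK.
    exact: (idB Hqi).
  case: (Hqp (R0_horner D Ra) Ra qDa) => // qD.
  apply: (IH D Dm qD).
  have hsz : size P = (size D).+1.
    by rewrite {1}hP size_addl sDX // ltnS (leq_trans (size_polyC_leq1 _)) // lt0n size_poly_eq0.
  by move: hs; rewrite hsz ltnS.
set N0 := P`_0 in q0 e.
have [u [v Buv]] := Bezoutz N0 p.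
have g1 : gcdz N0 p = 1.
  rewrite /gcdz /=.
  set g := gcdn `|N0| p.
  have gp : (g %| p)%N by exact: dvdn_gcdr.
  have gpos : (0 < g)%N by rewrite gcdn_gt0 pp orbT.
  have hpg : p = (p %/ g * g)%N by rewrite divnK.
  have qhg : q ((p %/ g)%:R * g%:R) by rewrite -natrM -hpg.
  case: (Hqp (nat_R0 _) (nat_R0 _) qhg) => qx.
    have hpos : (0 < p %/ g)%N by rewrite divn_gt0 // dvdn_leq.
    have hle : (p %/ g <= p)%N by rewrite leq_div.
    case: (ltnP (p %/ g) p) => hlt; first by exfalso; apply: (pmin _ hlt).
    have ep : (p %/ g = p)%N by apply/eqP; rewrite eqn_leq hle.
    have e2 : (p %/ g * g = p * 1)%N by rewrite -hpg muln1.
    rewrite ep in e2; move/eqP: e2; rewrite eqn_pmul2l // => /eqP ->.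
    done.
  exfalso; apply: q0.
  have hle : (g <= p)%N by rewrite dvdn_leq.
  case: (ltnP g p) => hlt; first by exfalso; apply: (pmin _ hlt).
  have ep : g = p by apply/eqP; rewrite eqn_leq hle.
  apply: (int_in (p := p)) => //; rewrite -ep; exact: dvdn_gcdl.
rewrite g1 in Buv.
exists (- (u%:~R * (map_poly iK D).[a])).
  by apply: R0N; apply: R0M; [exact: (R0Z F L) | exact: R0_horner].
have -> : 1 - - (u%:~R * (map_poly iK D).[a]) * a
          = u%:~R * (map_poly iK P).[a] + v%:~R * p%:R.
  have B : (u%:~R * N0%:~R + v%:~R * (p%:Z)%:~R : K) = 1.
    by have := congr1 iK Buv; rewrite rmorphD !rmorphM rmorph1.
  rewrite -pmulrn in B.
  rewrite e; exact: bez_id.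
apply: (idD Hqi); apply: (idMl Hqi) => //; exact: (R0Z F L).
Qed.

End Max.

End C.


Section D.
Variables (K : fieldExtType rat) (F L : {subfield K}).
Local Notation R0 := (ring_of_integers (F :&: L)%VS).

Definition comax (J1 J2 : K -> Prop) := exists a b, [/\ J1 a, J2 b & a + b = 1].

Lemma comax_sym J1 J2 : comax J1 J2 -> comax J2 J1.
Proof. by case=> a [b [h1 h2 h3]]; exists b, a; split=> //; rewrite addrC. Qed.

Lemma one_minus_pow J e f s : is_ideal R0 J -> R0 e -> J f -> e + f = 1 -> J (1 - e ^+ s).
Proof.
move=> HJ Re Jf ef; elim: s => [|s IH]; first by rewrite expr0 subrr; exact: id0 HJ.
have -> : 1 - e ^+ s.+1 = (1 - e ^+ s) + e ^+ s * f.
  have hf : f = 1 - e by rewrite -ef addrAC subrr add0r.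
  by rewrite hf exprS; ring.
apply: (idD HJ) => //; apply: (idMl HJ) => //; exact: R0X.
Qed.

Lemma comax_powl J1 J2 s : is_ideal R0 J1 -> is_ideal R0 J2 -> comax J1 J2 ->
  comax (ideal_pow R0 J1 s) J2.
Proof.
move=> H1 H2 [a [b [ha hb hab]]]; exists (a ^+ s), (1 - a ^+ s); split.
- by apply: pow_mem => //; exact: (idR0 H1).
- exact: (one_minus_pow (f := b)) (idR0 H1 ha) hb hab.
- by rewrite addrC subrK.
Qed.

Lemma comax_pows J1 J2 s t : is_ideal R0 J1 -> is_ideal R0 J2 -> comax J1 J2 ->
  comax (ideal_pow R0 J1 s) (ideal_pow R0 J2 t).
Proof.
move=> H1 H2 h; apply: comax_sym; apply: comax_powl => //.
  exact: pow_ideal.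
by apply: comax_sym; apply: comax_powl.
Qed.

Lemma comax_primes q1 q2 : prime_ideal R0 q1 -> prime_ideal R0 q2 ->
  (exists x, q1 x /\ x <> 0) -> (exists x, q2 x /\ x <> 0) ->
  (exists x, ~ (q1 x <-> q2 x)) -> comax q1 q2.
Proof.
move=> P1 P2 nz1 nz2 [x hx].
have I1 : is_ideal R0 q1 by case: P1.
have I2 : is_ideal R0 q2 by case: P2.
case: (classic (q1 x)) => h1.
  have h2 : ~ q2 x by move=> h2; apply: hx; split.
  have [r Rr hr] := maximal P2 nz2 (idR0 I1 h1) h2.
  exists (r * x), (1 - r * x); split=> //; first exact: (idMl I1).
  by rewrite addrC subrK.
have h2 : q2 x by apply: NNPP => h2; apply: hx; split.
have [r Rr hr] := maximal P1 nz1 (idR0 I2 h2) h1.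
exists (1 - r * x), (r * x); split=> //; first exact: (idMl I2).
by rewrite subrK.
Qed.

Section CRT.
Variables (I : eqType) (A : I -> K -> Prop).
Hypothesis HA : forall j, is_ideal R0 (A j).
Hypothesis Hco : forall j k, j != k -> comax (A j) (A k).

Lemma Elem j r : j \notin r -> exists E, [/\ R0 E, A j (1 - E) & prodr F L A r E].
Proof.
elim: r => [|k r IH] /=.
  move=> _; exists 1; split; [exact: R01 | rewrite subrr; exact: id0 | exact: R01].
rewrite inE negb_or => /andP[jk jr].
have [E [RE AE PE]] := IH jr.
have [a [b [ha hb hab]]] := Hco jk.
exists (b * E); split.
- by apply: R0M => //; exact: (idR0 (HA k)).
- have -> : 1 - b * E = (1 - E) + E * a.
    have hb' : b = 1 - a by rewrite -hab addrAC subrr add0r.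
    by rewrite hb'; ring.
  by apply: (idD (HA j)) => //; apply: (idMl (HA j)).
- exact: (fsum1 *%R).
Qed.

Lemma crt_surj (r : seq I) (y : I -> K) : uniq r -> (forall j, integral (y j)) ->
  exists x, integral x /\ forall j, j \in r -> IO (A j) (x - y j).
Proof.
move=> + hy; elim: r => [|j r IH] /=.
  by move=> _; exists 0; split=> //; exact: int0.
move=> /andP[jr ur]; have [x [ix hx]] := IH ur.
have [E [RE AE PE]] := Elem jr.
exists (x + E * (y j - x)); split.
  apply: intD; first exact: ix.
  by apply: intM; [exact: (R0_int RE) | exact: intB].
move=> k; rewrite inE => /orP[/eqP -> | kr].
  have -> : x + E * (y j - x) - y j = (1 - E) * (x - y j) by ring.
  by apply: IO1 => //; exact: intB.
have -> : x + E * (y j - x) - y k = (x - y k) + E * (y j - x) by ring.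
apply: IOD; first exact: hx.
apply: IO1; last exact: intB.
exact: (prodr_sub HA kr PE).
Qed.

Lemma crt_inj (r : seq I) z : uniq r -> integral z ->
  (forall j, j \in r -> IO (A j) z) -> IO (prodr F L A r) z.
Proof.
move=> + iz; elim: r => [|j r IH] /=.
  by move=> _ _; exact: IO_R0.
move=> /andP[jr ur] hz.
have hr : IO (prodr F L A r) z by apply: IH => // k kr; apply: hz; rewrite inE kr orbT.
have hj : IO (A j) z by apply: hz; rewrite inE eqxx.
have [E [RE AE PE]] := Elem jr.
have -> : z = (1 - E) * z + E * z by ring.
apply: IOD; first exact: IO_mul.
apply: IO_mono; last exact: (IO_mul PE hj).
move=> x; exact: imulC.
Qed.

End CRT.
End D.


Lemma petit_mul0l (T : zmodType) (mul : T -> T -> T) s g m (b : {ffun 'I_m -> T}) :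
  (forall x, mul 0 x = 0) -> petit_mul mul s g m 0 b = 0.
Proof.
move=> H; apply/ffunP => k; rewrite !ffunE; apply: big1 => i _; apply: big1 => j _.
by rewrite ffunE !H; case: ifP => _ //; case: ifP.
Qed.

Lemma petit_const_l (T : zmodType) (mul : T -> T -> T) s g m x (b : {ffun 'I_m -> T}) :
  (forall y, mul 0 y = 0) ->
  petit_mul mul s g m (const_poly m x) b = [ffun k => mul x (b k)].
Proof.
move=> H; apply/ffunP => k; rewrite !ffunE.
case: m k b => [|m] k b; first by case: k.
rewrite big_ord_recl [X in _ + X]big1 ?addr0; last first.
  move=> i _; apply: big1 => j _; rewrite ffunE /= !H.
  by case: ifP => _ //; case: ifP.
rewrite ffunE /= (bigD1 k) //= big1 ?addr0.
  by rewrite add0n eqxx.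
move=> j jk; rewrite add0n.
have -> : (j == k :> nat) = false by apply/negbTE.
have -> : (nat_of_ord j == k + m.+1)%N = false.
  by apply/negbTE; rewrite neq_ltn (leq_trans (ltn_ord j)) ?leq_addl.
by [].
Qed.

Section Lam.
Variables (K : fieldExtType rat) (rho sigma : K -> K) (c d : K) (n m : nat).
Local Notation LamR := (Lam rho sigma c d n m).
Local Notation cc := (fun a : K => const_poly m (const_poly n a)).

Lemma Lam_mul_const a (y : {ffun 'I_m -> {ffun 'I_n -> K}}) :
  smul LamR (cc a) y = [ffun i => [ffun k => a * y i k]].
Proof.
rewrite /= petit_const_l; last first.
  by move=> z; apply: petit_mul0l => w; rewrite mul0r.
apply/ffunP => i; rewrite !ffunE petit_const_l; last by move=> w; rewrite mul0r.
by apply/ffunP => k; rewrite !ffunE.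
Qed.

Definition ev (i : 'I_m) (k : 'I_n) (v : K) : {ffun 'I_m -> {ffun 'I_n -> K}} :=
  [ffun i' => [ffun k' => if (i' == i) && (k' == k) then v else 0]].

Lemma Lam_ideal_char (I : K -> Prop) (w : {ffun 'I_m -> {ffun 'I_n -> K}}) :
  ideal_ext LamR cc I w <-> (forall i k, IO I (w i k)).
Proof.
split.
  move=> [kk [a [y [Ha Hy ->]]]] i k.
  rewrite !sum_ffunE; apply: fsum_sum => t.
  rewrite Lam_mul_const !ffunE; apply: IO1; [exact: Ha | exact: Hy].
move=> H.
have -> : w = \sum_(i < m) \sum_(k < n) ev i k (w i k).
  apply/ffunP => i; apply/ffunP => k; rewrite sum_ffunE sum_ffunE.
  under eq_bigr => i0 _ do rewrite sum_ffunE sum_ffunE.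
  rewrite (bigD1 i) //= [X in _ + X]big1 ?addr0; last first.
    by move=> i0 /negbTE hi; apply: big1 => k0 _; rewrite !ffunE eq_sym hi.
  rewrite (bigD1 k) //= [X in _ + X]big1 ?addr0; last first.
    by move=> k0 /negbTE hk; rewrite !ffunE eqxx eq_sym hk.
  by rewrite !ffunE !eqxx.
apply: (fsum_sum (P := I) (Q := sdom LamR) (f := fun a y => smul LamR (cc a) y)) => i.
apply: (fsum_sum (P := I) (Q := sdom LamR) (f := fun a y => smul LamR (cc a) y)) => k.
apply: (fsum_hom (f := fun a y => smul (OK_ring K) (id a) y) (h := ev i k)) (H i k).
- by apply/ffunP => i'; apply/ffunP => k'; rewrite !ffunE; case: ifP.
- by move=> u v; apply/ffunP => i'; apply/ffunP => k'; rewrite !ffunE; case: ifP; rewrite ?addr0.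
move=> a y Ha Hy.
have -> : ev i k (smul (OK_ring K) (id a) y) = smul LamR (cc a) (ev i k y).
  rewrite Lam_mul_const; apply/ffunP => i'; apply/ffunP => k'; rewrite !ffunE /=.
  by case: ifP; rewrite ?mulr0.
apply: (fsum1 (fun a y => smul LamR (cc a) y)) => //.
move=> i' k' /=; rewrite !ffunE; case: ifP => _ //; exact: int0.
Qed.

End Lam.


Unset Implicit Arguments.

Theorem theorem3 (K : fieldExtType rat) (F L : {subfield K}) (n m : nat)
  (rho sigma : {rmorphism K -> K})
  (HF : cyclic_with_gen F rho n) (HL : cyclic_with_gen L sigma m)
  (Hcomm : forall x, rho (sigma x) = sigma (rho x))
  (c : K) (Hc : unit_of (ring_of_integers (F :&: L)%VS) c)
  (HD : division_ring (smul (Dalg rho c n)))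
  (d : K) (Hd : unit_of (ring_of_integers L) d)
  (Hirr : skew_irreducible (smul (Dalg rho c n)) (coefwise sigma)
            (tm_minus (sone (Dalg rho c n)) m (const_poly n d)))
  (I : K -> Prop) (l : nat) (q : 'I_l -> K -> Prop) (s : 'I_l -> nat)
  (HI : is_ideal (ring_of_integers (F :&: L)%VS) I)
  (HI0 : exists x, I x /\ x <> 0)
  (Hq : forall j, prime_ideal (ring_of_integers (F :&: L)%VS) (q j))
  (Hqd : forall j j', j != j' -> exists x, ~ (q j x <-> q j' x))
  (Hs : forall j, (0 < s j)%N)
  (HIfact : forall x, I x <->
     ideal_prod (ring_of_integers (F :&: L)%VS)
       (fun j => ideal_pow (ring_of_integers (F :&: L)%VS) (q j) (s j)) x)
  (Hiso : siso (quot (Dord rho c n) (ideal_ext (Dord rho c n) (const_poly n) I))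
               (sprod (fun j => Dj rho c n
                          (ideal_pow (ring_of_integers (F :&: L)%VS) (q j) (s j))))) :
  siso (quot (Lam rho sigma c d n m)
             (ideal_ext (Lam rho sigma c d n m)
                (fun a => const_poly m (const_poly n a)) I))
       (sprod (fun j => Pj rho sigma c d n m
                  (ideal_pow (ring_of_integers (F :&: L)%VS) (q j) (s j)))).
Proof.
pose R0 := ring_of_integers (F :&: L)%VS.
pose A := fun j => ideal_pow R0 (q j) (s j).
have HAi : forall j, is_ideal R0 (A j).
  by move=> j; apply: pow_ideal; case: (Hq j).
have HIsub : forall x j, I x -> A j x.
  move=> x j /HIfact Hx.
  exact: (prodr_sub (F := F) (L := L) (A := A) HAi (mem_enum _ j) Hx).
have Hnz : forall j, exists x, q j x /\ x <> 0.
  move=> j; case: HI0 => x [Ix xn0]; exists x; split=> //.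
  apply: (pow_sub (F := F) (L := L) (s := s j)) => //; first by case: (Hq j).
  exact: HIsub.
have Hco : forall j k, j != k -> comax (A j) (A k).
  move=> j k jk; apply: comax_pows; [by case: (Hq j) | by case: (Hq k) | ].
  exact (comax_primes (Hq j) (Hq k) (Hnz j) (Hnz k) (Hqd j k jk)).
have Hinj : forall z, integral z -> (forall j, IO (A j) z) -> IO I z.
  move=> z iz hz; apply: IO_mono; last first.
    apply: (crt_inj (F := F) (L := L) HAi Hco (enum_uniq _) iz) => j _; exact: hz.
  by move=> x Hx; apply/(HIfact x); exact: Hx.
have Hproj : forall z j, IO I z -> IO (A j) z.
  by move=> z j; apply: IO_mono => x; exact: HIsub.
have Hsurj : forall y : 'I_l -> K, (forall j, integral (y j)) ->
    exists x, integral x /\ forall j, IO (A j) (x - y j).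
  move=> y hy; have [x [ix hx]] := crt_surj HAi Hco (enum_uniq (ordinal l)) hy.
  by exists x; split=> // j; apply: hx; rewrite mem_enum.
have Brefl : forall u : {ffun 'I_l -> {ffun 'I_m -> {ffun 'I_n -> K}}},
    forall j i k, exists2 z, IO (A j) z & u j i k - u j i k = z.
  by move=> u j i k; exists 0; [exact: IO0 | rewrite subrr].
exists (fun x => [ffun j : 'I_l => x]).
split; [|split; [|split; [|split; [|split]]]].
- by move=> x hx j i k; rewrite ffunE; exact: hx.
- move=> x y hx hy; split.
    move=> H; exists (x - y); last by [].
    apply/Lam_ideal_char => i k; rewrite !ffunE; apply: Hinj.
      by apply: intB; [exact: hx | exact: hy].
    move=> j; case: (H j i k) => z hz; rewrite !ffunE => ->; exact: hz.
  case=> z /Lam_ideal_char Hz Heq j i k.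
  exists (x i k - y i k); last by rewrite !ffunE.
  apply: Hproj; have := Hz i k; have := Heq i k; rewrite !ffunE => ->; done.
- move=> y hy.
  have HG : forall i, exists g : {ffun 'I_n -> K},
      forall k, integral (g k) /\ forall j, IO (A j) (g k - y j i k).
    move=> i.
    have [g hg] := fin_all_exists
      (P := fun k x => integral x /\ forall j, IO (A j) (x - y j i k))
      (fun k => Hsurj (fun j => y j i k) (fun j => hy j i k)).
    by exists [ffun k => g k] => k; rewrite ffunE.
  have [G hG] := fin_all_exists HG.
  exists [ffun i => G i].
    by move=> i k; rewrite ffunE; case: (hG i k).
  move=> j i k; exists (G i k - y j i k); last by rewrite !ffunE.
  by case: (hG i k) => _ h; exact: h.
- move=> x y hx hy j i k; exists 0; first exact: IO0.
  by rewrite !ffunE subrr.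
- move=> x y hx hy.
  set u := [ffun j : 'I_l => _].
  set v := (X in seqv _ _ X).
  have -> : v = u by apply/ffunP => j; rewrite !ffunE.
  exact: Brefl.
- set u := [ffun j : 'I_l => _].
  set v := (X in seqv _ _ X).
  have -> : v = u by apply/ffunP => j; rewrite !ffunE.
  exact: Brefl.
Qed.
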